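(* Let $\omega\le\lambda\le\kappa$ be cardinals, $\tau$ a signature, $\mu:=|\mathrm{fnc}(\tau)|$, $\nu\ge 1$ a cardinal, and $\varphi$ a sentence of $\mathcal L_{\kappa,\lambda}(\tau)$. Let $\kappa':=\max(\kappa,\mu^+,\nu^+)$ and $\lambda':=\max(\lambda,\nu^+)$. Then each of $\vartheta_{\le\nu}(\varphi)$ and $\vartheta_{\nu}(\varphi)$ is expressible by a sentence of $\mathcal L_{\kappa',\lambda'}(\tau)$.
   Context: $\mathrm{fnc}(\tau)$ is the set of function symbols of $\tau$, constant symbols counted as $0$-ary function symbols. Models are nonempty; a submodel of a $\tau$-model is a substructure (nonempty subset closed under the interpretations of all symbols in $\mathrm{fnc}(\tau)$, with induced structure). For infinite cardinals $\lambda\le\kappa$, $\mathcal L_{\kappa,\lambda}(\tau)$ is the infinitary first-order language with equality whose formulas are built from atomic formulas by negation, conjunctions and disjunctions of fewer than $\kappa$ formulas, and existential/universal quantification over blocks of fewer than $\lambda$ variables. $\mathfrak A\vDash\vartheta_{\nu}(\varphi)$ iff $\mathfrak A$ has a submodel of cardinality exactly $\nu$ satisfying $\varphi$; $\mathfrak A\vDash\vartheta_{\le\nu}(\varphi)$ iff $\mathfrak A$ has a submodel of cardinality $\le\nu$ satisfying $\varphi$. A property is expressible by a sentence $\chi$ if for every $\tau$-model $\mathfrak A$, $\mathfrak A$ has the property iff $\mathfrak A\vDash\chi$. *)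

(* Defs.v *)
(* Infinitary logic L_{kappa,lambda}(tau) with cardinals
   represented by types (cardinality comparisons via injections). *)
From Stdlib Require Import Vectors.Fin.

Definition le_card (X Y : Type) : Prop := exists f : X -> Y, forall x y, f x = f y -> x = y.
Definition lt_card (X Y : Type) : Prop := le_card X Y /\ ~ le_card Y X.
Definition bij_card (X Y : Type) : Prop :=
  exists (f : X -> Y) (g : Y -> X), (forall x, g (f x) = x) /\ (forall y, f (g y) = y).

(* K' is the cardinal max(|K|, |Mu|^+, |Nu|^+): the least cardinal that is
   >= |K|, > |Mu| and > |Nu|. *)
Definition is_max_succ3 (K Mu Nu K' : Type) : Prop :=
  le_card K K' /\ lt_card Mu K' /\ lt_card Nu K' /\
  (forall X : Type, le_card K X -> lt_card Mu X -> lt_card Nu X -> le_card K' X).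

(* L' is max(|L|, |Nu|^+). *)
Definition is_max_succ2 (L Nu L' : Type) : Prop :=
  le_card L L' /\ lt_card Nu L' /\
  (forall X : Type, le_card L X -> lt_card Nu X -> le_card L' X).

Record signature := {
  fsym : Type;                (* function symbols, constants = 0-ary *)
  farity : fsym -> nat;
  rsym : Type;
  rarity : rsym -> nat }.

Section Syntax.
Variable tau : signature.

Inductive term (V : Type) : Type :=
| tvar : V -> term V
| tapp : forall f : fsym tau, (Fin.t (farity tau f) -> term V) -> term V.

(* Formulas of L_{K,L}(tau) with free variables among V:
   conjunctions/disjunctions over index sets of size < |K|,
   quantifier blocks over variable sets of size < |L|. *)
Inductive form (K L : Type) : Type -> Type :=
| fEq : forall V, term V -> term V -> form K L V
| fRel : forall V (r : rsym tau), (Fin.t (rarity tau r) -> term V) -> form K L V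
| fNeg : forall V, form K L V -> form K L V
| fConj : forall V (I : Type), lt_card I K -> (I -> form K L V) -> form K L V
| fDisj : forall V (I : Type), lt_card I K -> (I -> form K L V) -> form K L V
| fEx : forall V (W : Type), lt_card W L -> form K L (V + W) -> form K L V
| fAll : forall V (W : Type), lt_card W L -> form K L (V + W) -> form K L V.

Definition sentence (K L : Type) := form K L Empty_set.
End Syntax.

Arguments tvar {tau V}.
Arguments tapp {tau V}.

Record structure (tau : signature) := {
  carrier : Type;
  carrier_ne : inhabited carrier;
  finterp : forall f : fsym tau, (Fin.t (farity tau f) -> carrier) -> carrier;
  rinterp : forall r : rsym tau, (Fin.t (rarity tau r) -> carrier) -> Prop }.

Arguments carrier {tau}.
Arguments finterp {tau}.
Arguments rinterp {tau}.

Section Semantics.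
Variable tau : signature.
Variable A : structure tau.

Fixpoint eval {V : Type} (a : V -> carrier A) (t : term tau V) : carrier A :=
  match t with
  | tvar v => a v
  | tapp f args => finterp A f (fun i => eval a (args i))
  end.

Definition extend {V W : Type} (a : V -> carrier A) (b : W -> carrier A)
  (x : V + W) : carrier A :=
  match x with inl v => a v | inr w => b w end.

Fixpoint sat {K L V : Type} (p : form tau K L V) : (V -> carrier A) -> Prop :=
  match p in form _ _ _ V0 return (V0 -> carrier A) -> Prop with
  | fEq _ _ _ _ t1 t2 => fun a => eval a t1 = eval a t2
  | fRel _ _ _ _ r args => fun a => rinterp A r (fun i => eval a (args i))
  | fNeg _ _ _ _ q => fun a => ~ sat q a
  | fConj _ _ _ _ Ix _ qs => fun a => forall i : Ix, sat (qs i) a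
  | fDisj _ _ _ _ Ix _ qs => fun a => exists i : Ix, sat (qs i) a
  | fEx _ _ _ _ W _ q => fun a => exists b : W -> carrier A, sat q (extend a b)
  | fAll _ _ _ _ W _ q => fun a => forall b : W -> carrier A, sat q (extend a b)
  end.

Definition models {K L : Type} (phi : sentence tau K L) : Prop :=
  sat phi (fun e : Empty_set => match e with end).
End Semantics.

Definition closed_sub {tau} (A : structure tau) (S : carrier A -> Prop) : Prop :=
  forall (f : fsym tau) (args : Fin.t (farity tau f) -> carrier A),
    (forall i, S (args i)) -> S (finterp A f args).

Definition substructure {tau} (A : structure tau) (S : carrier A -> Prop)
  (Sne : exists x, S x) (Scl : closed_sub A S) : structure tau :=
  {| carrier := {x : carrier A | S x};
     carrier_ne := match Sne with ex_intro _ x Hx => inhabits (exist _ x Hx) end;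
     finterp := fun f args =>
       exist _ (finterp A f (fun i => proj1_sig (args i)))
               (Scl f _ (fun i => proj2_sig (args i)));
     rinterp := fun r args => rinterp A r (fun i => proj1_sig (args i)) |}.

Definition theta_eq {tau K L} (Nu : Type) (phi : sentence tau K L)
  (A : structure tau) : Prop :=
  exists (S : carrier A -> Prop) (Sne : exists x, S x) (Scl : closed_sub A S),
    bij_card {x : carrier A | S x} Nu /\ models tau (substructure A S Sne Scl) phi.

Definition theta_le {tau K L} (Nu : Type) (phi : sentence tau K L)
  (A : structure tau) : Prop :=
  exists (S : carrier A -> Prop) (Sne : exists x, S x) (Scl : closed_sub A S),
    le_card {x : carrier A | S x} Nu /\ models tau (substructure A S Sne Scl) phi.

Definition expressible {tau} (K L : Type) (P : structure tau -> Prop) : Prop :=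
  exists chi : sentence tau K L, forall A : structure tau, P A <-> models tau A chi.

(* Main.v *)
Require Import Defs.
From Stdlib Require Import Vectors.Fin List Lia Classical ClassicalEpsilon FunctionalExtensionality ProofIrrelevance.

Lemma le_comp (X Y Z : Type) : le_card X Y -> le_card Y Z -> le_card X Z.
Proof. intros [f Hf] [g Hg]. exists (fun x => g (f x)). auto. Qed.

Lemma lt_le_trans (X Y Z : Type) : lt_card X Y -> le_card Y Z -> lt_card X Z.
Proof.
  intros [H1 H2] H3. split. eapply le_comp; eauto.
  intros H4. apply H2. eapply le_comp; eauto.
Qed.

Lemma le_lt_trans (X Y Z : Type) : le_card X Y -> lt_card Y Z -> lt_card X Z.
Proof.
  intros H1 [H2 H3]. split. eapply le_comp; eauto.
  intros H4. apply H3. eapply le_comp; eauto.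
Qed.

Lemma lt_bool_nat : lt_card bool nat.
Proof.
  split.
  - exists (fun b : bool => if b then 1 else 0). intros [|] [|]; simpl; congruence.
  - intros [f Hf].
    destruct (f 0) eqn:E0, (f 1) eqn:E1, (f 2) eqn:E2;
    try (assert (0 = 1) by (apply Hf; congruence); discriminate);
    try (assert (0 = 2) by (apply Hf; congruence); discriminate);
    try (assert (1 = 2) by (apply Hf; congruence); discriminate).
Qed.

Lemma lt_fin_nat (n : nat) : lt_card (Fin.t n) nat.
Proof.
  split.
  - exists (fun x => proj1_sig (Fin.to_nat x)). intros x y H. apply Fin.to_nat_inj; auto.
  - intros [f Hf].
    set (g := fun k => proj1_sig (Fin.to_nat (f k))).
    assert (Hg : forall k l, g k = g l -> k = l).
    { intros k l H. apply Hf. apply Fin.to_nat_inj. exact H. }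
    assert (Hlt : forall k, g k < n).
    { intros k. unfold g. destruct (Fin.to_nat (f k)); simpl; auto. }
    assert (HN : NoDup (map g (seq 0 (S n)))).
    { apply NoDup_map_NoDup_ForallPairs. intros x y _ _. apply Hg. apply seq_NoDup. }
    assert (Hi : incl (map g (seq 0 (S n))) (seq 0 n)).
    { intros x Hx. apply in_map_iff in Hx. destruct Hx as [k [<- _]].
      apply in_seq. specialize (Hlt k). lia. }
    pose proof (NoDup_incl_length HN Hi) as HL.
    rewrite length_map, !length_seq in HL. lia.
Qed.

Fixpoint tren {tau : signature} {V V' : Type} (s : V -> V') (t : term tau V) : term tau V' :=
  match t with
  | tvar v => tvar (s v)
  | tapp f args => tapp f (fun i => tren s (args i))
  end.

Definition summap {V V' W : Type} (s : V -> V') (x : V + W) : V' + W :=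
  match x with inl v => inl (s v) | inr w => inr w end.

Definition conj2 {tau K L V} (hb : lt_card bool K) (p q : form tau K L V) : form tau K L V :=
  fConj tau K L V bool hb (fun b => if b then p else q).

Definition memf {tau K L Nu V} (hN : lt_card Nu K) (t : term tau V) (n : Nu -> V) : form tau K L V :=
  fDisj tau K L V Nu hN (fun j => fEq tau K L V t (tvar (n j))).

Definition memall {tau K L Nu V W} (hW : lt_card W K) (hN : lt_card Nu K) (n : Nu -> V)
  : form tau K L (V + W) :=
  fConj tau K L (V + W) W hW (fun w => memf hN (tvar (inr w)) (fun j => inl (n j))).

Fixpoint rel {tau K L K' L' Nu} (hKK : le_card K K') (hLL : le_card L L') (hLK : le_card L K')
  (hb : lt_card bool K') (hN : lt_card Nu K') {V} (p : form tau K L V) {struct p}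
  : forall V', (V -> V') -> (Nu -> V') -> form tau K' L' V' :=
  match p in form _ _ _ V0 return forall V', (V0 -> V') -> (Nu -> V') -> form tau K' L' V' with
  | fEq _ _ _ _ t1 t2 => fun V' s n => fEq _ _ _ V' (tren s t1) (tren s t2)
  | fRel _ _ _ _ r args => fun V' s n => fRel _ _ _ V' r (fun i => tren s (args i))
  | fNeg _ _ _ _ q => fun V' s n => fNeg _ _ _ V' (rel hKK hLL hLK hb hN q V' s n)
  | fConj _ _ _ _ Ix HI qs => fun V' s n =>
      fConj _ _ _ V' Ix (lt_le_trans _ _ _ HI hKK) (fun i => rel hKK hLL hLK hb hN (qs i) V' s n)
  | fDisj _ _ _ _ Ix HI qs => fun V' s n =>
      fDisj _ _ _ V' Ix (lt_le_trans _ _ _ HI hKK) (fun i => rel hKK hLL hLK hb hN (qs i) V' s n)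
  | fEx _ _ _ _ W HW q => fun V' s n =>
      fEx _ _ _ V' W (lt_le_trans _ _ _ HW hLL)
        (conj2 hb (memall (lt_le_trans _ _ _ HW hLK) hN n)
           (rel hKK hLL hLK hb hN q (V' + W) (summap s) (fun j => inl (n j))))
  | fAll _ _ _ _ W HW q => fun V' s n =>
      fNeg _ _ _ V' (fEx _ _ _ V' W (lt_le_trans _ _ _ HW hLL)
        (conj2 hb (memall (lt_le_trans _ _ _ HW hLK) hN n)
           (fNeg _ _ _ _ (rel hKK hLL hLK hb hN q (V' + W) (summap s) (fun j => inl (n j))))))
  end.

Lemma sat_conj2 tau (A : structure tau) K L V hb (p q : form tau K L V) a :
  sat tau A (conj2 hb p q) a <-> sat tau A p a /\ sat tau A q a.
Proof.
  simpl. split.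
  - intros H. exact (conj (H true) (H false)).
  - intros [H1 H2] [|]; assumption.
Qed.

Lemma sat_memall tau (A : structure tau) K L Nu V W hW hN (n : Nu -> V) (a : V -> carrier A) (b : W -> carrier A) :
  sat tau A (memall (K:=K) (L:=L) hW hN n) (extend tau A a b) <->
  forall w, exists j, b w = a (n j).
Proof. simpl. reflexivity. Qed.

Lemma eval_tren tau (A : structure tau) S Sne Scl V V' (s : V -> V') (c : V -> {x | S x})
  (a : V' -> carrier A) :
  (forall v, proj1_sig (c v) = a (s v)) ->
  forall t : term tau V,
    proj1_sig (eval tau (substructure A S Sne Scl) c t) = eval tau A a (tren s t).
Proof.
  intros Hc t. induction t as [v|f args IH]; simpl.
  - apply Hc.
  - f_equal. apply functional_extensionality. intros i. apply IH.
Qed.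

Lemma rel_sat tau K L K' L' Nu hKK hLL hLK hb hN (A : structure tau) S Sne Scl :
  forall V (p : form tau K L V) V' (s : V -> V') (n : Nu -> V')
    (c : V -> {x | S x}) (a : V' -> carrier A),
    (forall v, proj1_sig (c v) = a (s v)) ->
    (forall x, S x <-> exists j, x = a (n j)) ->
    (sat tau (substructure A S Sne Scl) p c <->
     sat tau A (rel (K':=K') (L':=L') hKK hLL hLK hb hN p V' s n) a).
Proof.
  intros V p. induction p; intros V' s n c a Hc HS.
  - simpl. rewrite <- !(eval_tren tau A S Sne Scl _ _ s c a Hc). split.
    + intros ->. reflexivity.
    + intros H. apply eq_sig_hprop; auto. intros; apply proof_irrelevance.
  - simpl. assert (E : (fun i => proj1_sig (eval tau (substructure A S Sne Scl) c (t i)))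
                      = (fun i => eval tau A a (tren s (t i)))).
    { apply functional_extensionality. intros i. apply eval_tren; auto. }
    rewrite E. reflexivity.
  - simpl. rewrite (IHp V' s n c a Hc HS). reflexivity.
  - simpl. split; intros H0 i; apply (H i V' s n c a Hc HS); auto.
  - simpl. split; intros [i Hi]; exists i; apply (H i V' s n c a Hc HS); auto.
  - simpl. split.
    + intros [b Hb]. exists (fun w => proj1_sig (b w)). intros [|].
      * intros w. destruct (proj1 (HS _) (proj2_sig (b w))) as [j Hj]. exists j. exact Hj.
      * apply (IHp (V' + W)%type (summap s) (fun j => inl (n j)) (extend tau (substructure A S Sne Scl) c b)
                 (extend tau A a (fun w => proj1_sig (b w)))); auto.
        intros [v|w]; simpl; auto.
    + intros [b' Hb']. pose proof (Hb' true) as Hm. pose proof (Hb' false) as Hr. simpl in Hm, Hr.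
      assert (HSb : forall w, S (b' w)).
      { intros w. apply HS. destruct (Hm w) as [j Hj]. exists j. exact Hj. }
      exists (fun w => exist _ (b' w) (HSb w)).
      apply (IHp (V' + W)%type (summap s) (fun j => inl (n j)) _ (extend tau A a b')); auto.
      intros [v|w]; simpl; auto.
  - simpl. split.
    + intros Hall [b' Hb']. pose proof (Hb' true) as Hm. pose proof (Hb' false) as Hr. simpl in Hm, Hr.
      assert (HSb : forall w, S (b' w)).
      { intros w. apply HS. destruct (Hm w) as [j Hj]. exists j. exact Hj. }
      apply Hr.
      apply (IHp (V' + W)%type (summap s) (fun j => inl (n j)) (extend tau (substructure A S Sne Scl) c (fun w => exist _ (b' w) (HSb w))) (extend tau A a b')); auto.
      intros [v|w]; simpl; auto.
    + intros Hn b. apply NNPP. intros Hq. apply Hn.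
      exists (fun w => proj1_sig (b w)). intros [|].
      * intros w. destruct (proj1 (HS _) (proj2_sig (b w))) as [j Hj]. exists j. exact Hj.
      * intros Hr. apply Hq.
        apply (IHp (V' + W)%type (summap s) (fun j => inl (n j)) (extend tau (substructure A S Sne Scl) c b)
                 (extend tau A a (fun w => proj1_sig (b w)))); auto.
        intros [v|w]; simpl; auto.
Qed.

Definition clos {tau K' L' Nu V} (hF : lt_card (fsym tau) K') (hb : lt_card bool K')
  (hN : lt_card Nu K') (hfK : forall m, lt_card (Fin.t m) K')
  (hfL : forall m, lt_card (Fin.t m) L') (n : Nu -> V) : form tau K' L' V :=
  fConj _ _ _ V (fsym tau) hF (fun f => fNeg _ _ _ V
    (fEx _ _ _ V (Fin.t (farity tau f)) (hfL _)
      (conj2 hb (memall (hfK _) hN n)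
         (fNeg _ _ _ _ (memf hN (tapp f (fun i => tvar (inr i))) (fun j => inl (n j))))))).

Lemma sat_clos tau (A : structure tau) K' L' Nu V hF hb hN hfK hfL (n : Nu -> V) a :
  sat tau A (clos (K':=K') (L':=L') hF hb hN hfK hfL n) a <->
  forall f (y : Fin.t (farity tau f) -> carrier A),
    (forall i, exists j, y i = a (n j)) -> exists j, finterp A f y = a (n j).
Proof.
  simpl. split.
  - intros H f y Hy. apply NNPP. intros Hn. apply (H f). exists y. intros [|].
    + exact Hy.
    + exact Hn.
  - intros H f [y Hy]. pose proof (Hy true) as H1. pose proof (Hy false) as H2.
    simpl in H1, H2. apply H2. apply H. exact H1.
Qed.

Definition injf {tau K' L' Nu V} (hN : lt_card Nu K')
  (hs : forall j : Nu, lt_card {k : Nu | k <> j} K') (n : Nu -> V) : form tau K' L' V :=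
  fConj _ _ _ V Nu hN (fun j => fConj _ _ _ V {k : Nu | k <> j} (hs j)
    (fun k => fNeg _ _ _ V (fEq _ _ _ V (tvar (n j)) (tvar (n (proj1_sig k)))))).

Lemma sat_injf tau (A : structure tau) K' L' Nu V hN hs (n : Nu -> V) a :
  sat tau A (injf (K':=K') (L':=L') hN hs n) a <->
  forall j k, a (n j) = a (n k) -> j = k.
Proof.
  simpl. split.
  - intros H j k E. apply NNPP. intros Hn. apply (H j (exist _ k (fun e => Hn (eq_sym e)))). exact E.
  - intros H j [k Hk] E. apply Hk. symmetry. apply H. exact E.
Qed.

Theorem lemma1 (K L : Type) (tau : signature) (Nu : Type) (K' L' : Type)
  (hLinf : le_card nat L) (hLK : le_card L K)
  (hNu : inhabited Nu)
  (hK' : is_max_succ3 K (fsym tau) Nu K')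
  (hL' : is_max_succ2 L Nu L')
  (phi : sentence tau K L) :
  expressible K' L' (theta_le Nu phi) /\ expressible K' L' (theta_eq Nu phi).
Proof.
  destruct hK' as [hKK [hF [hN _]]]. destruct hL' as [hLL [hNL _]].
  pose proof (le_comp _ _ _ hLK hKK) as hLK'.
  pose proof (le_comp _ _ _ hLinf hLK') as hnK.
  pose proof (le_comp _ _ _ hLinf hLL) as hnL.
  assert (hb : lt_card bool K') by (eapply lt_le_trans; [apply lt_bool_nat | exact hnK]).
  assert (hfK : forall m, lt_card (Fin.t m) K') by (intros m; eapply lt_le_trans; [apply lt_fin_nat | exact hnK]).
  assert (hfL : forall m, lt_card (Fin.t m) L') by (intros m; eapply lt_le_trans; [apply lt_fin_nat | exact hnL]).
  assert (hs : forall j : Nu, lt_card {k : Nu | k <> j} K').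
  { intros j. eapply le_lt_trans; [|exact hN]. exists (@proj1_sig _ _).
    intros x y E. apply eq_sig_hprop; auto. intros; apply proof_irrelevance. }
  set (R := rel (K':=K') (L':=L') hKK hLL hLK' hb hN phi (Empty_set + Nu)%type
              (fun e : Empty_set => match e with end) inr).
  set (C := clos (K':=K') (L':=L') hF hb hN hfK hfL (V := (Empty_set + Nu)%type) inr).
  set (J := injf (tau:=tau) (K':=K') (L':=L') hN hs (V := (Empty_set + Nu)%type) inr).
  assert (KEY : forall (A : structure tau) (b : Nu -> carrier A),
     sat tau A C (extend tau A (fun e : Empty_set => match e with end) b) ->
     exists (S : carrier A -> Prop) (Sne : exists x, S x) (Scl : closed_sub A S),
       (forall x, S x <-> exists j, x = b j) /\
       (models tau (substructure A S Sne Scl) phi <->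
        sat tau A R (extend tau A (fun e : Empty_set => match e with end) b))).
  { intros A b HC. unfold C in HC; pose proof (proj1 (sat_clos tau A K' L' Nu _ hF hb hN hfK hfL inr _) HC) as HC'; clear HC; rename HC' into HC. simpl in HC.
    exists (fun x => exists j, x = b j).
    assert (Sne : exists x, exists j, x = b j) by (destruct hNu as [j0]; exists (b j0), j0; reflexivity).
    assert (Scl : closed_sub A (fun x => exists j, x = b j)) by (intros f args Ha; apply HC; exact Ha).
    exists Sne, Scl. split; [reflexivity|].
    unfold models, R. apply rel_sat.
    - intros [].
    - intros x. simpl. reflexivity. }
  assert (KEY2 : forall (A : structure tau) (S : carrier A -> Prop) Sne Scl (b : Nu -> carrier A),
     (forall x, S x <-> exists j, x = b j) ->
     models tau (substructure A S Sne Scl) phi ->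
     sat tau A (fEx tau K' L' Empty_set Nu hNL (conj2 hb C R)) (fun e : Empty_set => match e with end)).
  { intros A S Sne Scl b HS Hm. exists b. apply sat_conj2. split.
    - unfold C; apply sat_clos. simpl. intros f y Hy. apply HS. apply Scl. intros i. apply HS. apply Hy.
    - unfold R. refine (proj1 (rel_sat tau K L K' L' Nu hKK hLL hLK' hb hN A S Sne Scl Empty_set phi _ _ inr (fun e => match e with end) _ _ HS) Hm).
      intros []. }
  split.
  - exists (fEx tau K' L' Empty_set Nu hNL (conj2 hb C R)). intros A. split.
    + intros [S [Sne [Scl [[g Hg] Hm]]]].
      destruct (constructive_indefinite_description _ Sne) as [x0 Hx0].
      set (b := fun j => match excluded_middle_informative (exists x : {x | S x}, g x = j) with
                | left H => proj1_sig (proj1_sig (constructive_indefinite_description _ H))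
                | right _ => x0 end).
      apply (KEY2 A S Sne Scl b); auto.
      intros x. split.
      * intros Sx. exists (g (exist _ x Sx)). unfold b.
        destruct (excluded_middle_informative _) as [H|H].
        -- destruct (constructive_indefinite_description _ H) as [x' Hx']. simpl.
           apply Hg in Hx'. rewrite Hx'. reflexivity.
        -- exfalso. apply H. eauto.
      * intros [j ->]. unfold b. destruct (excluded_middle_informative _) as [H|H]; auto.
        destruct (constructive_indefinite_description _ H) as [x' Hx']. simpl.
        exact (proj2_sig x').
    + intros [b Hb]. apply sat_conj2 in Hb. destruct Hb as [HC HR].
      destruct (KEY A b HC) as [S [Sne [Scl [HS Hm]]]].
      exists S, Sne, Scl. split; [|apply Hm; exact HR].
      exists (fun x => proj1_sig (constructive_indefinite_description _ (proj1 (HS _) (proj2_sig x)))).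
      intros x y E.
      destruct (constructive_indefinite_description _ (proj1 (HS _) (proj2_sig x))) as [jx Ex].
      destruct (constructive_indefinite_description _ (proj1 (HS _) (proj2_sig y))) as [jy Ey].
      simpl in E. subst jy. apply eq_sig_hprop; [intros; apply proof_irrelevance|].
      rewrite Ex, Ey. reflexivity.
  - exists (fEx tau K' L' Empty_set Nu hNL (conj2 hb (conj2 hb C J) R)). intros A. split.
    + intros [S [Sne [Scl [[f [g [Hgf Hfg]]] Hm]]]].
      set (b := fun j => proj1_sig (g j)).
      assert (HS : forall x, S x <-> exists j, x = b j).
      { intros x. split.
        - intros Sx. exists (f (exist _ x Sx)). unfold b. rewrite Hgf. reflexivity.
        - intros [j ->]. exact (proj2_sig (g j)). }
      destruct (KEY2 A S Sne Scl b HS Hm) as [b' Hb']. simpl in Hb'.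
      exists b. apply sat_conj2. split; [apply sat_conj2; split|].
      * unfold C; apply sat_clos. simpl. intros f0 y Hy. apply HS. apply Scl. intros i. apply HS. apply Hy.
      * unfold J; apply sat_injf. simpl. intros j k E.
        rewrite <- (Hfg j), <- (Hfg k). f_equal. apply eq_sig_hprop; [intros; apply proof_irrelevance|].
        exact E.
      * unfold R. refine (proj1 (rel_sat tau K L K' L' Nu hKK hLL hLK' hb hN A S Sne Scl Empty_set phi _ _ inr (fun e => match e with end) _ _ HS) Hm).
        intros [].
    + intros [b Hb]. apply sat_conj2 in Hb. destruct Hb as [HCJ HR].
      apply sat_conj2 in HCJ. destruct HCJ as [HC HJ].
      unfold J in HJ; pose proof (proj1 (sat_injf tau A K' L' Nu _ hN hs inr _) HJ) as HJ'; clear HJ; rename HJ' into HJ. simpl in HJ.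
      destruct (KEY A b HC) as [S [Sne [Scl [HS Hm]]]].
      exists S, Sne, Scl. split; [|apply Hm; exact HR].
      exists (fun x => proj1_sig (constructive_indefinite_description _ (proj1 (HS _) (proj2_sig x)))).
      exists (fun j => exist S (b j) (proj2 (HS _) (ex_intro _ j eq_refl))).
      split.
      * intros x. destruct (constructive_indefinite_description _ (proj1 (HS _) (proj2_sig x))) as [jx Ex].
        simpl. apply eq_sig_hprop; [intros; apply proof_irrelevance|]. simpl. symmetry. exact Ex.
      * intros j. destruct (constructive_indefinite_description _ _) as [jx Ex]. simpl in *.
        apply HJ. symmetry. exact Ex.
Qed.
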